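(* Let $T$ be a finite set of types and $n$ a positive integer. Suppose there exist $(\hat\lambda,\hat\mu)\in\mathcal{S}(\mathcal{G}_T^n)$ such that $\hat\lambda/(1-\hat\mu)=\gamma(\mathcal{G}_T^n)$. Then there exist $(c^1,f^1),(c^2,f^2)\in T$, $(x_1,y_1,z_1),(x_2,y_2,z_2)\in\mathcal{I}_{\mathcal{R}}$ and $\eta\in[0,1]$ such that for $j=1,2$ $$(z_j-x_j)f^j(x_j)+(y_j-z_j)f^j(x_j+1)+c^j(x_j)=\hat\lambda\,c^j(y_j)+\hat\mu\,c^j(x_j),$$ and $$\eta\big[z_1f^1(x_1)+(y_1-z_1)f^1(x_1+1)\big]+(1-\eta)\big[z_2f^2(x_2)+(y_2-z_2)f^2(x_2+1)\big]=\eta\,x_1f^1(x_1)+(1-\eta)\,x_2f^2(x_2).$$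
   Context: $T=\{(c_1,f_1),\dots,(c_m,f_m)\}$ is a finite set of types with $c_t,f_t:\{1,\dots,n\}\to\mathbb{R}$, extended by $c_t(0)=f_t(0)=f_t(n+1)=0$. With $\mathbb{N}=\{0,1,\dots\}$, $\mathcal{I}=\{(x,y,z)\in\mathbb{N}^3:1\le x+y-z\le n,\ z\le\min\{x,y\}\}$ and $\mathcal{I}_{\mathcal{R}}=\{(x,y,z)\in\mathcal{I}:x+y-z=n\text{ or }(x-z)(y-z)z=0\}$. $\mathcal{S}(\mathcal{G}_T^n)$ is the set of $(\lambda,\mu)$ with $\lambda>0$, $\mu<1$ such that for all $(c,f)\in T$ and all $(x,y,z)\in\mathcal{I}_{\mathcal{R}}$: $(z-x)f(x)+(y-z)f(x+1)+c(x)\le\lambda c(y)+\mu c(x)$. $\gamma(\mathcal{G}_T^n)=\inf\{\lambda/(1-\mu):(\lambda,\mu)\in\mathcal{S}(\mathcal{G}_T^n)\}$. *)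

(* Defs.v *)
From Stdlib Require Import Reals Lra Lia List.
Open Scope R_scope.

(* A type (c, f) is a pair of real functions on {1,...,n}; we represent them as
   functions nat -> R and only use their values on {1,...,n} via [ext],
   which implements the convention c(0)=f(0)=f(n+1)=0 (values outside
   {1..n} are set to 0; only 0 and n+1 are ever evaluated outside). *)
Definition typ : Type := ((nat -> R) * (nat -> R))%type.

Definition ext (n : nat) (g : nat -> R) (k : nat) : R :=
  if andb (Nat.leb 1 k) (Nat.leb k n) then g k else 0.

Definition in_I (n x y z : nat) : Prop :=
  (z <= x)%nat /\ (z <= y)%nat /\ (1 <= x + y - z)%nat /\ (x + y - z <= n)%nat.

Definition in_IR (n x y z : nat) : Prop :=
  in_I n x y z /\ ((x + y - z)%nat = n \/ ((x - z) * (y - z) * z)%nat = 0%nat).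

Definition ineq_lhs (n : nat) (t : typ) (x y z : nat) : R :=
  let c := ext n (fst t) in let f := ext n (snd t) in
  (INR z - INR x) * f x + (INR y - INR z) * f (S x) + c x.

Definition ineq_rhs (n : nat) (t : typ) (lam mu : R) (x y : nat) : R :=
  let c := ext n (fst t) in lam * c y + mu * c x.

Definition in_S (T : list typ) (n : nat) (lam mu : R) : Prop :=
  0 < lam /\ mu < 1 /\
  forall t, In t T -> forall x y z, in_IR n x y z ->
    ineq_lhs n t x y z <= ineq_rhs n t lam mu x y.

(* gamma(G_T^n) = inf { lam/(1-mu) : (lam,mu) in S } ; "g = gamma" is
   expressed as g being the greatest lower bound of that set. *)
Definition ratio_set (T : list typ) (n : nat) (r : R) : Prop :=
  exists lam mu, in_S T n lam mu /\ r = lam / (1 - mu).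

Definition is_gamma (T : list typ) (n : nat) (g : R) : Prop :=
  (forall r, ratio_set T n r -> g <= r) /\
  (forall b, (forall r, ratio_set T n r -> b <= r) -> b <= g).

(* Main.v *)
Require Import Defs.
From Stdlib Require Import Reals Lra Lia List Psatz Classical.
Open Scope R_scope.

Lemma eps_local (g e a : R) : 0 <= g -> (0 < g \/ 0 < e) ->
  exists eps, 0 < eps /\ forall d, 0 < d <= eps -> 0 <= g + d*e - d*d*a.
Proof.
  intros Hg [Hg'|He].
  - assert (Hp : 0 < Rabs e + Rabs a + 1) by (pose proof (Rabs_pos e); pose proof (Rabs_pos a); lra).
    exists (Rmin 1 (g / (Rabs e + Rabs a + 1))). split.
    + apply Rmin_pos; [lra| apply Rdiv_lt_0_compat; lra].
    + intros d [Hd1 Hd2].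
      assert (H1 : d <= 1) by (eapply Rle_trans; [exact Hd2| apply Rmin_l]).
      assert (H2 : d <= g / (Rabs e + Rabs a + 1)) by (eapply Rle_trans; [exact Hd2| apply Rmin_r]).
      assert (H3 : d * (Rabs e + Rabs a + 1) <= g).
      { apply (Rmult_le_compat_r (Rabs e + Rabs a + 1)) in H2; [|lra].
        unfold Rdiv in H2. rewrite Rmult_assoc, Rinv_l in H2; lra. }
      pose proof (Rle_abs e). pose proof (Rle_abs (-e)). rewrite Rabs_Ropp in H0.
      pose proof (Rle_abs a). pose proof (Rabs_pos a).
      assert (d*d*a <= d * Rabs a).
      { assert (d*d*a <= d*d*Rabs a) by (apply Rmult_le_compat_l; nra).
        assert (d*d*Rabs a <= d * Rabs a) by (apply Rmult_le_compat_r; nra). lra. }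
      assert (- (d * Rabs e) <= d*e) by nra.
      nra.
  - assert (Hp : 0 < Rabs a + 1) by (pose proof (Rabs_pos a); lra).
    exists (e / (Rabs a + 1)). split; [apply Rdiv_lt_0_compat; lra|].
    intros d [Hd1 Hd2].
    assert (H3 : d * (Rabs a + 1) <= e).
    { apply (Rmult_le_compat_r (Rabs a + 1)) in Hd2; [|lra].
      unfold Rdiv in Hd2. rewrite Rmult_assoc, Rinv_l in Hd2; lra. }
    pose proof (Rle_abs a).
    assert (d*d*a <= d*d*Rabs a) by (apply Rmult_le_compat_l; nra).
    nra.
Qed.

Lemma finite_eps {X : Type} (L : list X) (Q : X -> R -> Prop) :
  (forall k, In k L -> exists e, 0 < e /\ forall d, 0 < d <= e -> Q k d) ->
  exists e, 0 < e /\ forall k, In k L -> forall d, 0 < d <= e -> Q k d.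
Proof.
  induction L as [|k L IH]; intros H.
  - exists 1. split; [lra|]. intros k [].
  - destruct (H k (or_introl eq_refl)) as [e1 [He1 H1]].
    destruct IH as [e2 [He2 H2]]. { intros k' Hk'. apply H. right. exact Hk'. }
    exists (Rmin e1 e2). split; [apply Rmin_pos; lra|].
    intros k' [<-|Hk'] d [Hd1 Hd2].
    + apply H1. split; [lra|]. eapply Rle_trans; [exact Hd2|apply Rmin_l].
    + apply H2; auto. split; [lra|]. eapply Rle_trans; [exact Hd2|apply Rmin_r].
Qed.

Lemma AB n t lam mu x y z : ineq_lhs n t x y z = ineq_rhs n t lam mu x y ->
  INR z * ext n (snd t) x + (INR y - INR z) * ext n (snd t) (S x) - INR x * ext n (snd t) x
  = lam * ext n (fst t) y - (1 - mu) * ext n (fst t) x.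
Proof. unfold ineq_lhs, ineq_rhs; simpl; intros H. lra. Qed.

Definition Dv n lh mh (t : typ) x y := lh * ext n (fst t) y - (1 - mh) * ext n (fst t) x.

Lemma bound_IR n x y z : in_IR n x y z -> (x <= n /\ y <= n /\ z <= n)%nat.
Proof. unfold in_IR, in_I. lia. Qed.

Theorem lemma3 (T : list typ) (n : nat) (hn : (1 <= n)%nat)
  (lh mh : R) (hS : in_S T n lh mh) (hopt : is_gamma T n (lh / (1 - mh))) :
  exists t1 t2 x1 y1 z1 x2 y2 z2 eta,
    In t1 T /\ In t2 T /\ in_IR n x1 y1 z1 /\ in_IR n x2 y2 z2 /\
    0 <= eta <= 1 /\
    ineq_lhs n t1 x1 y1 z1 = ineq_rhs n t1 lh mh x1 y1 /\
    ineq_lhs n t2 x2 y2 z2 = ineq_rhs n t2 lh mh x2 y2 /\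
    (let f1 := ext n (snd t1) in let f2 := ext n (snd t2) in
     eta * (INR z1 * f1 x1 + (INR y1 - INR z1) * f1 (S x1))
     + (1 - eta) * (INR z2 * f2 x2 + (INR y2 - INR z2) * f2 (S x2))
     = eta * (INR x1 * f1 x1) + (1 - eta) * (INR x2 * f2 x2)).
Proof.
  destruct (classic (exists t1 t2 x1 y1 z1 x2 y2 z2,
    In t1 T /\ In t2 T /\ in_IR n x1 y1 z1 /\ in_IR n x2 y2 z2 /\
    ineq_lhs n t1 x1 y1 z1 = ineq_rhs n t1 lh mh x1 y1 /\
    ineq_lhs n t2 x2 y2 z2 = ineq_rhs n t2 lh mh x2 y2 /\
    0 <= Dv n lh mh t1 x1 y1 /\ Dv n lh mh t2 x2 y2 <= 0)) as [P|NP].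
  - destruct P as (t1 & t2 & x1 & y1 & z1 & x2 & y2 & z2 & I1 & I2 & R1 & R2 & E1 & E2 & D1 & D2).
    pose proof (AB _ _ _ _ _ _ _ E1) as A1. pose proof (AB _ _ _ _ _ _ _ E2) as A2.
    unfold Dv in D1, D2.
    set (d1 := lh * ext n (fst t1) y1 - (1 - mh) * ext n (fst t1) x1) in *.
    set (d2 := lh * ext n (fst t2) y2 - (1 - mh) * ext n (fst t2) x2) in *.
    destruct (Req_dec d1 d2) as [Heq|Hne].
    + exists t1, t2, x1, y1, z1, x2, y2, z2, 1. do 7 (split; [auto; lra|]).
      simpl. assert (d1 = 0) by lra. lra.
    + exists t1, t2, x1, y1, z1, x2, y2, z2, (- d2 / (d1 - d2)).
      do 4 (split; [auto|]).
      split.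
      { split; [apply Rmult_le_pos; [lra| left; apply Rinv_0_lt_compat; lra]|].
        apply (Rmult_le_reg_r (d1 - d2)); [lra|]. unfold Rdiv.
        rewrite Rmult_assoc, Rinv_l by lra. lra. }
      do 2 (split; [auto|]). simpl.
      set (e := - d2 / (d1 - d2)).
      assert (He : e * d1 + (1 - e) * d2 = 0) by (unfold e; field; lra).
      set (f1 := ext n (snd t1)) in *. set (f2 := ext n (snd t2)) in *.
      rewrite <- A1, <- A2 in He. lra.
  - exfalso.
    destruct hS as (Hl & Hm & Hc).
    set (g := fun t x y z => ineq_rhs n t lh mh x y - ineq_lhs n t x y z).
    assert (Hs : exists s, (s = 1 \/ s = -1) /\ forall t x y z, In t T -> in_IR n x y z ->
              0 < g t x y z \/ 0 < s * Dv n lh mh t x y).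
    { destruct (classic (exists t x y z, In t T /\ in_IR n x y z /\
          ineq_lhs n t x y z = ineq_rhs n t lh mh x y /\ 0 < Dv n lh mh t x y)) as [Ex|NEx].
      - destruct Ex as (t0 & x0 & y0 & z0 & I0 & R0 & E0 & D0).
        exists 1. split; [left; reflexivity|]. intros t x y z It Rt.
        pose proof (Hc t It x y z Rt). unfold g.
        destruct (Rle_lt_or_eq_dec _ _ H) as [Hlt|Heq]; [left; lra|right].
        destruct (Rle_or_lt (Dv n lh mh t x y) 0) as [Hd|Hd]; [|lra].
        exfalso; apply NP. exists t0, t, x0, y0, z0, x, y, z.
        refine (conj I0 (conj It (conj R0 (conj Rt (conj E0 (conj _ (conj _ _))))))); lra.
      - exists (-1). split; [right; reflexivity|]. intros t x y z It Rt.
        pose proof (Hc t It x y z Rt). unfold g.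
        destruct (Rle_lt_or_eq_dec _ _ H) as [Hlt|Heq]; [left; lra|right].
        destruct (Rle_or_lt (Dv n lh mh t x y) 0) as [Hd|Hd].
        + destruct (Req_dec (Dv n lh mh t x y) 0) as [Hz|Hz]; [|lra].
          exfalso; apply NP. exists t, t, x, y, z, x, y, z.
          refine (conj It (conj It (conj Rt (conj Rt (conj _ (conj _ (conj _ _))))))); lra.
        + exfalso; apply NEx. exists t, x, y, z. auto. }
    destruct Hs as (s & Hs1 & Hs).
    set (L := list_prod T (list_prod (seq 0 (S n)) (list_prod (seq 0 (S n)) (seq 0 (S n))))).
    destruct (finite_eps L (fun k d => match k with (t, (x, (y, z))) =>
        in_IR n x y z -> 0 <= g t x y z + d * (s * Dv n lh mh t x y) - d * d * ext n (fst t) y end))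
      as (eps & Heps & Hall).
    { intros [t [x [y z]]] Hk.
      destruct (classic (in_IR n x y z)) as [Rt|NR].
      - apply in_prod_iff in Hk. destruct Hk as [It _].
        destruct (eps_local (g t x y z) (s * Dv n lh mh t x y) (ext n (fst t) y)) as (e & He & H).
        + unfold g. pose proof (Hc t It x y z Rt). lra.
        + apply Hs; auto.
        + exists e. split; auto.
      - exists 1. split; [lra|]. intros d _ Rt; contradiction. }
    set (d := Rmin eps (Rmin (1/2) (lh/2))).
    assert (Hd0 : 0 < d) by (apply Rmin_pos; [lra|apply Rmin_pos; lra]).
    assert (Hd1 : d <= eps) by apply Rmin_l.
    assert (Hd2 : d <= 1/2) by (eapply Rle_trans; [apply Rmin_r|apply Rmin_l]).
    assert (Hd3 : d <= lh/2) by (eapply Rle_trans; [apply Rmin_r|apply Rmin_r]).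
    set (lam' := (1 + s*d) * lh - d*d).
    set (mu' := mh - s * d * (1 - mh)).
    assert (Hsd : 0 < 1 + s*d) by (destruct Hs1; subst; lra).
    assert (Hsd' : 1/2 <= 1 + s*d) by (destruct Hs1; subst; lra).
    assert (Hlam : 0 < lam').
    { unfold lam'. assert (d*d <= d * (1/2)) by nra. nra. }
    assert (Hmu : 1 - mu' = (1 - mh) * (1 + s*d)) by (unfold mu'; ring).
    assert (HS' : in_S T n lam' mu').
    { split; [exact Hlam|]. split; [nra|].
      intros t It x y z Rt.
      assert (Hk : In (t, (x, (y, z))) L).
      { apply bound_IR in Rt as B. apply in_prod; auto.
        repeat (apply in_prod); apply in_seq; lia. }
      specialize (Hall _ Hk d (conj Hd0 Hd1) Rt). unfold g, Dv in Hall.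
      unfold ineq_rhs in *. unfold lam', mu'. simpl in *. nra. }
    destruct hopt as [Hlow _].
    specialize (Hlow (lam' / (1 - mu')) (ex_intro _ lam' (ex_intro _ mu' (conj HS' eq_refl)))).
    assert (Hr : lam' / (1 - mu') = lh / (1 - mh) - d*d / ((1 - mh) * (1 + s*d))).
    { rewrite Hmu. unfold lam'. field. lra. }
    assert (0 < d*d / ((1 - mh) * (1 + s*d))).
    { apply Rdiv_lt_0_compat; nra. }
    lra.
Qed.
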